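(* Let $(X,\rho)$ be a compact metric space of diameter $d$ and let $\mu$ be a nondegenerate Borel probability measure on $X$. Then for every $\varepsilon>0$, $$H_{\rho,(d+1)\varepsilon}(\mu)\le H'_{\rho,\varepsilon}(\mu).$$
   Context: For a Borel probability measure $\mu$ on a metric space $(X,\rho)$: $H_{\rho,\varepsilon}(\mu)=\inf\{H(\nu): k_\rho(\nu,\mu)<\varepsilon\}$, where $\nu$ ranges over discrete probability measures $\nu=\sum_i c_i\delta_{x_i}$ with finite entropy $H(\nu)=-\sum_i c_i\ln c_i$, and $k_\rho$ is the Kantorovich (Monge–Kantorovich transportation, Wasserstein-1) metric on Borel probability measures on $(X,\rho)$. Also $H'_{\rho,\varepsilon}(\mu)=\min\{\ln k: \exists X'\subset X,\ \mu(X')>1-\varepsilon,\ \exists x_1,\dots,x_k \text{ with } X'\subset\bigcup_{i=1}^kV_\varepsilon(x_i)\}$, where $V_\varepsilon(x)$ is the $\rho$-ball of radius $\varepsilon$ centered at $x$. Nondegenerate means every nonempty open set has positive measure. *)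

(* Defs.v *)
From HB Require Import structures.
From mathcomp Require Import all_boot all_order all_algebra.
From mathcomp Require Import all_classical all_reals all_analysis.
Set Implicit Arguments. Unset Strict Implicit. Unset Printing Implicit Defensive.
Import Order.TTheory GRing.Theory Num.Theory.
Local Open Scope classical_set_scope.
Local Open Scope ring_scope.

Section Defs.
Context {R : realType}.

Definition km_is_metric {X : Type} (rho : X -> X -> R) : Prop :=
  [/\ forall x y, 0 <= rho x y,
      forall x y, rho x y = 0 <-> x = y,
      forall x y, rho x y = rho y x &
      forall x y z, rho x z <= rho x y + rho y z].

Definition km_rball {X : Type} (rho : X -> X -> R) (x : X) (r : R) : set X :=
  [set y | rho x y < r].

Definition km_rho_open {X : Type} (rho : X -> X -> R) (A : set X) : Prop :=
  forall x, A x -> exists2 r : R, 0 < r & km_rball rho x r `<=` A.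

Definition km_rho_compact {X : Type} (rho : X -> X -> R) : Prop :=
  forall (I : Type) (U : I -> set X), (forall i, km_rho_open rho (U i)) ->
    setT `<=` \bigcup_(i in setT) U i ->
    exists F : set I, finite_set F /\ setT `<=` \bigcup_(i in F) U i.

Definition km_diam {X : Type} (rho : X -> X -> R) : R :=
  sup [set rho z.1 z.2 | z in [set: X * X]].

Definition km_is_borel {d} {X : measurableType d} (rho : X -> X -> R) : Prop :=
  (@measurable d X) = <<s km_rho_open rho >>.

Definition km_nondegenerate {d} {X : measurableType d} (rho : X -> X -> R)
  (mu : probability X R) : Prop :=
  forall A : set X, km_rho_open rho A -> A !=set0 -> (0 < mu A)%E.

(* A discrete probability measure nu = sum_i c_i delta_{x_i} is represented
   by weights c and atoms x; atoms with positive weight are distinct. *)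
Definition km_disc_mass {X : Type} (c : nat -> R) (x : nat -> X) (A : set X) : \bar R :=
  (\sum_(0 <= i <oo) (c i * \1_A (x i))%:E)%E.

(* Shannon km_entropy H(nu) = - sum_i c_i ln c_i (with 0 ln 0 = 0) *)
Definition km_entropy (c : nat -> R) : \bar R :=
  (\sum_(0 <= i <oo) (- (c i * ln (c i)))%:E)%E.

Definition km_discrete_prob {X : Type} (c : nat -> R) (x : nat -> X) : Prop :=
  [/\ forall i, 0 <= c i,
      (\sum_(0 <= i <oo) (c i)%:E)%E = 1%E &
      forall i j, 0 < c i -> 0 < c j -> x i = x j -> i = j].

Definition km_coupling {d} {X : measurableType d} (c : nat -> R) (x : nat -> X)
  (mu : probability X R) (pi : probability (X * X)%type R) : Prop :=
  forall A : set X, measurable A ->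
    pi (A `*` setT) = km_disc_mass c x A /\ pi (setT `*` A) = mu A.

Definition km_kantorovich {d} {X : measurableType d} (rho : X -> X -> R)
  (c : nat -> R) (x : nat -> X) (mu : probability X R) : \bar R :=
  ereal_inf [set (\int[pi]_z (rho z.1 z.2)%:E)%E | pi in km_coupling c x mu].

Definition km_H_eps {d} {X : measurableType d} (rho : X -> X -> R)
  (eps : R) (mu : probability X R) : \bar R :=
  ereal_inf [set e | exists (c : nat -> R) (x : nat -> X),
    [/\ km_discrete_prob c x, (km_entropy c < +oo)%E,
        (km_kantorovich rho c x mu < eps%:E)%E & e = km_entropy c]].

Definition km_H'_eps {d} {X : measurableType d} (rho : X -> X -> R)
  (eps : R) (mu : probability X R) : \bar R :=
  ereal_inf [set (ln k%:R)%:E | k in [set k : nat | (0 < k)%N /\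
    exists X' : set X, [/\ measurable X', ((1 - eps)%:E < mu X')%E &
      exists xs : 'I_k -> X, X' `<=` \bigcup_(i in setT) km_rball rho (xs i) eps]]].

End Defs.

(* Main.v *)
Require Import Defs.
From mathcomp Require Import all_boot all_order all_algebra.
From mathcomp Require Import all_classical all_reals all_analysis.
From mathcomp Require Import ring lra measurable_realfun.
Import Order.TTheory GRing.Theory Num.Theory.
Local Open Scope classical_set_scope.
Local Open Scope ring_scope.

Lemma ent_term (R : realType) (m : nat) (c : R) : (0 < m)%N -> 0 <= c ->
  - (c * ln c) <= c * ln m%:R + (m%:R^-1 - c).
Proof.
move=> m0 c0; have mp : 0 < m%:R :> R by rewrite ltr0n.
have mi : 0 < m%:R^-1 :> R by rewrite invr_gt0.
have lnm0 : 0 <= ln (m%:R : R) by apply: ln_ge0; rewrite ler1n.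
case: (eqVneq c 0) => [->|cn0].
  rewrite !mul0r oppr0; lra.

have cp : 0 < c by rewrite lt0r cn0.
set t := m%:R^-1 / c.
have tp : 0 < t by rewrite divr_gt0.
have t1 : -1 < t - 1 by lra.
have h := @le_ln1Dx R (t - 1) t1.
have e1 : 1 + (t - 1) = t by ring.
rewrite e1 /t ln_div ?posrE // lnV ?posrE // in h.
have := h; rewrite -(ler_pM2l cp) => h2.
have e2 : c * (m%:R^-1 / c - 1) = m%:R^-1 - c by rewrite mulrBr mulrCA mulfV // !mulr1.
rewrite e2 mulrBr mulrN in h2.
lra.
Qed.

Lemma ent_bound (R : realType) (c : nat -> R) m : (0 < m)%N ->
  (forall i, 0 <= c i) -> \sum_(0 <= i < m) c i = 1 ->
  \sum_(0 <= i < m) - (c i * ln (c i)) <= ln m%:R.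
Proof.
move=> m0 c0 hc.
apply: (le_trans (y := \sum_(0 <= i < m) (c i * ln m%:R + (m%:R^-1 - c i)))).
  by apply: ler_sum => i _; apply: ent_term.
rewrite big_split /= -mulr_suml hc mul1r sumrB hc sumr_const_nat subn0.
have -> : (m%:R : R)^-1 *+ m = 1.
  by rewrite -(mulr_natr ((m%:R : R)^-1)) mulVf // pnatr_eq0 -lt0n.
by rewrite subrr addr0.
Qed.

Lemma le_int_nm (R : realType) d (T : measurableType d) (m : {measure set T -> \bar R})
  (f g : T -> \bar R) : (forall z, (0 <= f z)%E) -> (forall z, (f z <= g z)%E) ->
  (\int[m]_z f z <= \int[m]_z g z)%E.
Proof.
move=> f0 fg; rewrite !ge0_integralE //; last by move=> z _; apply: le_trans (fg z).
apply: ereal_sup_le => _ [h hle <-]; exists h => // x.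
apply: le_trans (hle x) _; rewrite /patch mem_setT; exact: fg.
Qed.

Lemma arith1 (R : realType) (eps dd r q : R) : 0 < dd -> r <= 1 - q -> 1 - eps < q ->
  eps + dd * r < (dd + 1) * eps.
Proof. move=> *; nra. Qed.

Section Cons.
Context (R : realType) (dX : measure_display) (X : measurableType dX)
  (rho : X -> X -> R) (mu : probability X R) (eps : R) (s : seq X) (s0 : X).
Hypothesis mball : forall a, measurable (km_rball rho a eps).
Hypothesis msing : forall a : X, measurable [set a].
Hypothesis s0s : s0 \in s.
Hypothesis us : uniq s.

Definition gfl (t : seq X) (y : X) : X :=
  foldr (fun a r => if `[< rho a y < eps >] then a else r) s0 t.

Lemma gfl_meas t : measurable_fun setT (gfl t).
Proof.
elim: t => [|a t IH] /=; first exact: measurable_cst.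
move=> _ B mB.
have -> : setT `&` (fun y => if `[< rho a y < eps >] then a else gfl t y) @^-1` B =
  (km_rball rho a eps `&` [set _ | B a]) `|` (~` km_rball rho a eps `&` (setT `&` gfl t @^-1` B)).
  apply/seteqP; split => y /=.
    case: asboolP => h [_ Hy]; [left|right] => //.
  by case=> [[h Ba]|[h [_ Hy]]]; split=> //; case: asboolP.
apply: measurableU; apply: measurableI => //.
- by case: (pselect (B a)) => Ba; [rewrite (_ : [set _ | B a] = setT) ?(eqP (set_true _))//; apply/seteqP; split => // |
   rewrite (_ : [set _ | B a] = set0)//; apply/seteqP; split => //].
- exact: measurableC.
- exact: IH.
Qed.

Lemma gfl_in t y : gfl t y \in s0 :: t.
Proof.
elim: t => [|a t IH] /=; first by rewrite inE.
case: asboolP => _; first by rewrite !inE eqxx orbT.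
by move: IH; rewrite !inE => /orP[->|->]; rewrite ?orbT.
Qed.

Lemma gfl_ball t y : (exists2 a, a \in t & rho a y < eps) -> rho (gfl t y) y < eps.
Proof.
elim: t => [|a t IH] /=; first by case.
case: asboolP => // h [b]; rewrite inE => /orP[/eqP-> //|bt] hb.
by apply: IH; exists b.
Qed.


Definition gf := gfl s.
Definition n := size s.
Definition cw (i : nat) : R :=
  if (i < n)%N then fine (mu (gf @^-1` [set nth s0 s i])) else 0.
Definition xw (i : nat) : X := nth s0 s i.

Lemma mpre A : measurable A -> measurable (gf @^-1` A).
Proof. by move=> mA; rewrite -[_ @^-1` _]setTI; apply: gfl_meas. Qed.

Lemma cwE i : (i < n)%N -> (cw i)%:E = mu (gf @^-1` [set xw i]).
Proof.
move=> lti; rewrite /cw lti fineK //; apply: fin_num_measure => //.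
exact: mpre.
Qed.

Lemma cw_ge0 i : 0 <= cw i.
Proof. rewrite /cw; case: ifP => // _; apply: fine_ge0; exact: measure_ge0. Qed.

Lemma gf_in y : gf y \in s.
Proof. by rewrite /gf; have := gfl_in s y; rewrite inE => /orP[/eqP->|]. Qed.

Lemma L1 A : mu (gf @^-1` A) = (\sum_(0 <= i < n) ((cw i) * \1_A (xw i))%:E)%E.
Proof.
rewrite big_mkord.
have -> : gf @^-1` A = \big[setU/set0]_(i < n | `[< A (xw i) >]) (gf @^-1` [set xw (val i)]).
  apply/seteqP; split => y.
    move=> Ay; rewrite -bigcup_seq_cond; have gs := gf_in y.
    have hi : (index (gf y) s < n)%N by rewrite index_mem.
    exists (Ordinal hi) => /=.
    + by rewrite /xw nth_index // mem_index_enum /=; apply/asboolP.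
    + by rewrite /xw nth_index.
  rewrite -bigcup_seq_cond => -[i /andP[_ /asboolP Ai]] /= ->; exact: Ai.
rewrite measure_bigsetU_ord_cond //.
- rewrite (big_mkcond (fun i => `[< _ >])); apply: eq_bigr => i _.
  rewrite indicE; case: asboolP => h.
    by rewrite mem_set // mulr1 cwE.
  by rewrite memNset // mulr0.
- by move=> i _; apply: mpre.
- move=> i j _ _ [y [/= -> e]]; apply/val_inj => /=.
  by apply/eqP; rewrite -(nth_uniq s0 _ _ us) //; apply/eqP.
Qed.


Lemma fin_series (f : nat -> \bar R) m :
  (forall i, (0 <= f i)%E) -> (forall i, (m <= i)%N -> f i = 0%E) ->
  (\sum_(0 <= i <oo) f i)%E = (\sum_(0 <= i < m) f i)%E.
Proof.
move=> f0 fm; rewrite (nneseries_split 0 m) // add0n eseries0 ?adde0 //.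
by move=> i mi _; apply: fm.
Qed.

Lemma cw0 i : (n <= i)%N -> cw i = 0.
Proof. by rewrite /cw leqNgt => /negbTE ->. Qed.

Lemma cw_le1 i : cw i <= 1.
Proof.
rewrite /cw; case: ifP => // _; rewrite -lee_fin fineK.
  by apply: probability_le1; apply: mpre.
by apply: fin_num_measure => //; apply: mpre.
Qed.

Lemma sum_cw : (\sum_(0 <= i < n) cw i) = 1.
Proof.
apply/eqP; rewrite -eqe -sumEFin; apply/eqP.
have := L1 setT; rewrite preimage_setT probability_setT => ->.
by apply: eq_bigr => i _; rewrite indicE mem_set // mulr1.
Qed.

Lemma disc_cw : km_discrete_prob cw xw.
Proof.
split.
- exact: cw_ge0.
- rewrite (@fin_series _ n); first by rewrite sumEFin sum_cw.
    by move=> i; rewrite lee_fin cw_ge0.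
  by move=> i /cw0 ->.
- move=> i j ci cj e.
  have ltn_c k : 0 < cw k -> (k < n)%N.
    by case: (ltnP k n) => // /cw0 ->; rewrite ltxx.
  by apply/eqP; rewrite -(nth_uniq s0 (ltn_c _ ci) (ltn_c _ cj) us); apply/eqP.
Qed.


Lemma ent_cw : km_entropy cw = (\sum_(0 <= i < n) - (cw i * ln (cw i)))%:E.
Proof.
rewrite /km_entropy (@fin_series _ n) ?sumEFin //.
  move=> i; rewrite lee_fin oppr_ge0 mulr_ge0_le0 ?cw_ge0 //.
  exact/ln_le0/cw_le1.
by move=> i /cw0 ->; rewrite mul0r oppr0.
Qed.

Lemma n_gt0 : (0 < n)%N.
Proof. by rewrite /n lt0n size_eq0; apply/eqP => s0'; move: s0s; rewrite s0'. Qed.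

Lemma ent_cw_le : (km_entropy cw <= (ln n%:R)%:E)%E.
Proof. by rewrite ent_cw lee_fin; apply: ent_bound n_gt0 cw_ge0 sum_cw. Qed.

Lemma ent_cw_fin : (km_entropy cw < +oo)%E.
Proof. by rewrite ent_cw ltry. Qed.


Definition Fm (y : X) : (X * X)%type := (gf y, y).
Lemma Fm_meas : measurable_fun setT Fm.
Proof. by apply: measurable_fun_pair; [exact: gfl_meas|]. Qed.
Definition Fmf : {mfun X >-> (X * X)%type} := mfun_Sub (mem_set Fm_meas).
Definition pi : probability (X * X)%type R := distribution mu Fmf.

Lemma piE B : pi B = mu (Fm @^-1` B).
Proof. by []. Qed.

Lemma pi_coupling : km_coupling cw xw mu pi.
Proof.
move=> A mA; rewrite !piE; split.
- have -> : Fm @^-1` (A `*` setT) = gf @^-1` A.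
    by apply/seteqP; split => y /=; [case|].
  rewrite L1 /km_disc_mass (@fin_series _ n) //.
    by move=> i; rewrite lee_fin mulr_ge0 ?cw_ge0.
  by move=> i /cw0 ->; rewrite mul0r.
- have -> : Fm @^-1` (setT `*` A) = A.
    by apply/seteqP; split => y /=; [case|].
  by [].
Qed.


Variables (dd : R) (X' : set X).
Hypotheses (eps0 : 0 < eps) (rho0 : forall a b, 0 <= rho a b)
  (rhod : forall a b, rho a b <= dd) (mX' : measurable X')
  (muX' : ((1 - eps)%:E < mu X')%E)
  (cov : forall y, X' y -> exists2 a, a \in s & rho a y < eps).

Definition G := \big[setU/set0]_(a <- s) ([set a] `*` km_rball rho a eps).
Lemma mG : measurable G.
Proof. by apply: bigsetU_measurable => a _; apply: measurableX. Qed.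

Lemma dd0 : 0 <= dd.
Proof. exact: le_trans (rho0 s0 s0) (rhod s0 s0). Qed.

Lemma rho_le_h z : ((rho z.1 z.2)%:E <= (eps + dd * \1_(~` G) z)%:E)%E.
Proof.
rewrite lee_fin indicE; case: (pselect (G z)) => Gz.
  rewrite memNset; last by move=> /(_ Gz).
  rewrite mulr0 addr0; move: Gz; rewrite /G -bigcup_seq => -[a /= sa [/= -> h]].
  exact: ltW.
rewrite mem_set // mulr1; apply: le_trans (rhod _ _) _; rewrite -{1}(add0r dd) lerD2r; exact: ltW.
Qed.

Lemma int_h : (\int[pi]_z (eps + dd * \1_(~` G) z)%:E = eps%:E + dd%:E * pi (~` G))%E.
Proof.
have mGc : measurable (~` G) by apply: measurableC; exact: mG.
under eq_integral do rewrite EFinD.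
rewrite ge0_integralD //.
- rewrite integral_cst // [X in (eps%:E * X)%E](_ : _ = 1%E) ?mule1; last exact: probability_setT.
  rewrite (@integralZl_indic _ _ _ pi setT measurableT (fun=> ~` G) dd) //; last first.
    by move=> dn; move: (dd0); rewrite leNgt dn.
  by rewrite integral_indic // setIT.
- by move=> z _; rewrite lee_fin; exact: ltW.
- by move=> z _; rewrite lee_fin mulr_ge0 // ?dd0.
apply/measurable_EFinP; apply: measurable_funM => //.
Qed.

Lemma piGc : (pi (~` G) <= mu (~` X'))%E.
Proof.
rewrite piE; apply: le_measure.
- rewrite inE; rewrite -[_ @^-1` _]setTI; apply: Fm_meas => //.
  by apply: measurableC; exact: mG.
- by rewrite inE; apply: measurableC.
- move=> y /= nG Xy; apply: nG.
  have gin := gf_in y; have hb : rho (gf y) y < eps by apply: gfl_ball; exact: cov.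
  rewrite /Fm /G -bigcup_seq; exists (gf y) => //.
Qed.


Lemma kant_lt : (km_kantorovich rho cw xw mu < ((dd + 1) * eps)%:E)%E.
Proof.
apply: (le_lt_trans (y := \int[pi]_z (rho z.1 z.2)%:E)%E).
  by apply: ereal_inf_lbound; exists pi => //; exact: pi_coupling.
case: (eqVneq dd 0) => [dz | dnz].
  have -> : (\int[pi]_z (rho z.1 z.2)%:E)%E = 0%E.
    rewrite (eq_integral (cst 0%E)) ?integral0 // => z _.
    have := rhod z.1 z.2; rewrite dz => h.
    by apply/eqP; rewrite /= eqe eq_le h rho0.
  by rewrite dz add0r mul1r lte_fin.
have ddp : 0 < dd by rewrite lt0r dnz dd0.
have f0 : forall z : X * X, (0 <= (rho z.1 z.2)%:E)%E by move=> z; rewrite lee_fin rho0.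
have hle := @le_int_nm _ _ _ pi _ _ f0 rho_le_h.
apply: (le_lt_trans hle).
rewrite int_h.
have fG : pi (~` G) \is a fin_num.
  by apply: fin_num_measure => //; apply: measurableC; exact: mG.
have fX : mu X' \is a fin_num by apply: fin_num_measure.
have hG := piGc; rewrite probability_setC // in hG.
have mX2 := muX'.
rewrite -(fineK fG) -(fineK fX) in hG mX2 *.
rewrite -EFinM -EFinD lte_fin; apply: (@arith1 _ _ _ _ (fine (mu X'))) => //.
Qed.

End Cons.

Theorem lemma3 (R : realType) (dX : measure_display) (X : measurableType dX)
  (rho : X -> X -> R) (mu : probability X R) :
  km_is_metric rho -> km_rho_compact rho -> km_is_borel rho -> km_nondegenerate rho mu ->
  forall eps : R, 0 < eps ->
    (km_H_eps rho ((km_diam rho + 1) * eps) mu <= km_H'_eps rho eps mu)%E.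
Proof.
move=> [r0 r0iff rsym rtri] cpt borel _ eps eps0.
have omeas (A : set X) : km_rho_open rho A -> dX.-measurable A.
  by move=> oA; rewrite borel; exact: sub_sigma_algebra.
have oball a r : km_rho_open rho (km_rball rho a r).
  move=> y /= hy; exists (r - rho a y); first by rewrite subr_gt0.
  move=> z /= hz; apply: le_lt_trans (rtri a y z) _.
  by rewrite -ltrBrDl.
have mball (a : X) : dX.-measurable (km_rball rho a eps) by apply: omeas.
have msing (a : X) : dX.-measurable [set a].
  have -> : [set a] = ~` [set y | y <> a].
    apply/seteqP; split => y /=; first by move=> -> h; apply: h.
    by case: (pselect (y = a)) => // h1 h2; exfalso; exact: h2 h1.
  apply: measurableC; apply: omeas => y /= ya.
  exists (rho y a).
    by rewrite lt0r r0 andbT; apply/eqP => /r0iff.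
  by move=> z hz za; move: hz; rewrite /km_rball /= za ltxx.
have [B rB] : exists B, forall a b, rho a b <= B.
  pose x0 : X := point.
  have [F [fF cF]] := cpt nat (fun n => km_rball rho x0 n%:R) (fun n => oball _ _)
    (fun y _ => ex_intro2 _ _ (Num.Def.archi_bound (rho x0 y)) I (archi_boundP (r0 _ _))).
  have [fs Ffs] := finite_fsetP.1 fF.
  pose N := \max_(i <- finmap.enum_fset fs) i.
  have hN y : rho x0 y <= N%:R.
    have [i Fi hi] := cF y I.
    apply: ltW; apply: lt_le_trans hi _; rewrite ler_nat.
    by apply: (leq_bigmax_seq (F := id)) => //; move: Fi; rewrite Ffs.
  exists (N%:R + N%:R) => a b; apply: le_trans (rtri a x0 b) _.
  by rewrite rsym; apply: lerD.
set d := km_diam rho.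
have rhod a b : rho a b <= d.
  apply: sup_upper_bound; last by exists (a, b).
  split; first by exists (rho a b); exists (a, b).
  by exists B => _ [[u v] _ <-]; apply: rB.
rewrite /km_H'_eps; apply: le_ereal_inf_tmp => _ [k [k0 [X' [mX' muX' [xs cov]]]] <-].
pose s := undup [seq xs i | i <- enum 'I_k].
pose s0 := xs (Ordinal k0).
have s0s : s0 \in s by rewrite mem_undup; apply: map_f; rewrite mem_enum.
have us : uniq s by apply: undup_uniq.
have cov' y : X' y -> exists2 a, a \in s & rho a y < eps.
  move=> /cov [i _ hi]; exists (xs i) => //.
  by rewrite mem_undup; apply: map_f; rewrite mem_enum.
apply: (le_trans (y := km_entropy (cw R dX X rho mu eps s s0))).
  apply: ereal_inf_lbound.
  exists (cw R dX X rho mu eps s s0), (xw dX X s s0); split => //.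
  - exact: disc_cw.
  - exact: ent_cw_fin.
  - exact: (@kant_lt _ _ _ rho mu eps s s0 mball msing s0s us d X' eps0 r0 rhod mX' muX' cov').
apply: le_trans (@ent_cw_le _ _ _ rho mu eps s s0 mball msing s0s us) _.
rewrite lee_fin ler_ln ?posrE ?ltr0n //.
- rewrite ler_nat /n (leq_trans (size_undup _)) // size_map size_enum_ord //.
- by rewrite lt0n size_eq0; apply/eqP => e; move: s0s; rewrite /n e.
Qed.
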